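(* Let $\mathcal{G}$ be a connected, homogeneous, bidirected coupled cell network with cell set $\mathcal{C}=\{1,\dots,n\}$ and edge set $\mathcal{E}$, each cell having phase space $\mathbb{R}$. Let $f:\mathbb{R}^n\to\mathbb{R}^n$ be the $\mathcal{G}$-admissible vector field with components \[ f_c(x)=\sum_{d\in I(c)}\phi_{[(c,d)]}(x_d-x_c),\qquad c\in\mathcal{C}, \] where for each edge type $\xi$, $\phi_\xi:\mathbb{R}\to\mathbb{R}$ is an odd $C^1$ function. Suppose there exists $\varepsilon>0$ such that $\alpha\,\phi_\xi(\alpha)>0$ for all $\alpha\in(-\varepsilon,\varepsilon)\setminus\{0\}$ and all edge types $\xi$. Let $\Delta=\{x\in\mathbb{R}^n: x_1=\dots=x_n\}$ and let $\Omega=\{x\in\mathbb{R}^n:\operatorname{dist}(x,\Delta)<r\}$ be the largest open hypercylinder around $\Delta$ such that $x\in\Omega$ implies $|x_d-x_c|<\varepsilon$ for all $(c,d)\in\mathcal{E}$. Then: (i) $\Omega$ is invariant under the flow of $\dot x=f(x)$ (solutions starting in $\Omega$ remain in $\Omega$ for all positive times); (ii) for $x\in\Omega$, $f(x)=0$ if and only if $x\in\Delta$.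
   Context: A coupled cell network consists of cells $\mathcal{C}=\{1,\dots,n\}$, edges $\mathcal{E}\subset\mathcal{C}\times\mathcal{C}$ without loops, and an equivalence relation on edges (edge types; $[e]$ is the type of $e$) compatible with an equivalence relation on cells. The input set of $c$ is the set of edges $(d,c)\in\mathcal{E}$; one writes $d\in I(c)$ when $(d,c)\in\mathcal{E}$. Cells $c,d$ are input equivalent if there is an edge-type preserving bijection between their input sets; the network is homogeneous if all cells are input equivalent. It is bidirected if $(i,j)\in\mathcal{E}$ iff $(j,i)\in\mathcal{E}$, with $(i,j)$ and $(j,i)$ of the same type. Connected means the underlying graph is connected. Admissible maps have components depending only on the cell's own variable and its inputs, with identical functional form across input-equivalent cells, edges of the same type being treated identically. *)

(* Defs.v *)
From HB Require Import structures.
From mathcomp Require Import all_boot all_order all_algebra.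
From mathcomp Require Import all_classical all_reals all_analysis.
Set Implicit Arguments. Unset Strict Implicit. Unset Printing Implicit Defensive.
Import Order.TTheory GRing.Theory Num.Theory.
Import numFieldNormedType.Exports.
Local Open Scope classical_set_scope.
Local Open Scope ring_scope.

(* A coupled cell network on cells 'I_n:
   - E d c : bool  means (d,c) is an edge (d is an input of c);
   - ety d c : ET  is the edge type [(d,c)] (label of its equivalence class);
     only meaningful when E d c;
   - cty c : CT    is the cell type (class of the cell equivalence). *)

Definition no_loops n (E : rel 'I_n) := forall c, ~~ E c c.

Definition types_compatible n ET CT (E : rel 'I_n) (ety : 'I_n -> 'I_n -> ET)
  (cty : 'I_n -> CT) :=
  forall d c d' c', E d c -> E d' c' -> ety d c = ety d' c' ->
    cty d = cty d' /\ cty c = cty c'.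

Definition input_equiv n ET (E : rel 'I_n) (ety : 'I_n -> 'I_n -> ET)
  (c c' : 'I_n) :=
  exists g : 'I_n -> 'I_n,
    [/\ forall d, E d c -> E (g d) c' /\ ety (g d) c' = ety d c,
        forall d1 d2, E d1 c -> E d2 c -> g d1 = g d2 -> d1 = d2
      & forall d', E d' c' -> exists2 d, E d c & g d = d'].

Definition homogeneous n ET (E : rel 'I_n) (ety : 'I_n -> 'I_n -> ET) :=
  forall c c', input_equiv E ety c c'.

Definition bidirected n ET (E : rel 'I_n) (ety : 'I_n -> 'I_n -> ET) :=
  forall i j, E i j -> E j i /\ ety i j = ety j i.

Definition connected_net n (E : rel 'I_n) :=
  forall i j : 'I_n, connect [rel a b | E a b || E b a] i j.

Definition diff_field {R : realType} n ET (E : rel 'I_n)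
  (ety : 'I_n -> 'I_n -> ET) (phi : ET -> R -> R) (x : 'I_n -> R) : 'I_n -> R :=
  fun c => \sum_(d < n | E d c) phi (ety c d) (x d - x c).

Definition Delta {R : realType} n : set ('I_n -> R) :=
  [set x | forall i j, x i = x j].

Definition eucl_dist {R : realType} n (x y : 'I_n -> R) : R :=
  Num.sqrt (\sum_(i < n) (x i - y i) ^+ 2).

Definition dist_Delta {R : realType} n (x : 'I_n -> R) : R :=
  inf [set eucl_dist x y | y in @Delta R n].

Definition cyl {R : realType} n (r : \bar R) : set ('I_n -> R) :=
  [set x | ((dist_Delta x)%:E < r)%E].

Definition small_diffs {R : realType} n (E : rel 'I_n) (eps : R) :
  set ('I_n -> R) :=
  [set x | forall c d, E c d -> `|x d - x c| < eps].

(* r is the radius of the largest open hypercylinder around Delta contained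
   in small_diffs E eps (r = +oo allowed, e.g. when there are no edges) *)
Definition largest_cyl_radius {R : realType} n (E : rel 'I_n) (eps : R)
  (r : \bar R) :=
  cyl r `<=` small_diffs E eps /\
  forall r' : \bar R, cyl r' `<=` small_diffs E eps -> (r' <= r)%E.

Definition is_solution {R : realType} n (F : ('I_n -> R) -> ('I_n -> R))
  (a b : R) (x : R -> 'I_n -> R) :=
  forall t, a < t < b -> forall c, is_derive t 1 (fun s => x s c) (F (x t) c).

(* Main.v *)
Require Import Defs.
From HB Require Import structures.
From mathcomp Require Import all_boot all_order all_algebra.
From mathcomp Require Import all_classical all_reals all_analysis.
From mathcomp Require Import ring lra.
Import Order.TTheory GRing.Theory Num.Theory.
Import numFieldNormedType.Exports.
Local Open Scope classical_set_scope.
Local Open Scope ring_scope.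


Section S.
Variables (R : realType) (n : nat) (ET : Type) (E : rel 'I_n) (ety : 'I_n -> 'I_n -> ET)
  (phi : ET -> R -> R).
Hypothesis bid : bidirected E ety.
Hypothesis odd : forall c d, E c d -> forall a, phi (ety c d) (- a) = - phi (ety c d) a.

Lemma Esym c d : E c d = E d c.
Proof. by apply/idP/idP => /bid []. Qed.

Lemma energy (x y : 'I_n -> R) : (forall i j, y i = y j) ->
  (\sum_c (x c - y c) * diff_field E ety phi x c) *+ 2 =
  - \sum_c \sum_(d < n | E d c) (x d - x c) * phi (ety c d) (x d - x c).
Proof.
move=> yc.
set F := fun c d => (x c - y c) * phi (ety c d) (x d - x c).
have S1 : \sum_c (x c - y c) * diff_field E ety phi x c
    = \sum_c \sum_(d < n) (if E d c then F c d else 0).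
  apply: eq_bigr => c _; rewrite /diff_field mulr_sumr big_mkcond /=.
  by [].
have S2 : \sum_c (x c - y c) * diff_field E ety phi x c
    = \sum_c \sum_(d < n) (if E d c then F d c else 0).
  rewrite S1 exchange_big /=; apply: eq_bigr => c _; apply: eq_bigr => d _.
  by rewrite Esym.
rewrite mulr2n {1}S1 S2 -big_split /= -sumrN; apply: eq_bigr => c _.
rewrite -big_split /= -sumrN [RHS]big_mkcond /=; apply: eq_bigr => d _.
case: ifP => Edc; last by rewrite addr0.
have [Ecd ety_eq] := bid _ _ Edc.
rewrite /F ety_eq -[x c - x d]opprB (odd _ _ Ecd) (yc d c); ring.
Qed.

Lemma term_ge0 eps (x : 'I_n -> R) c d :
  (forall c d, E c d -> forall a, 0 < `|a| < eps -> 0 < a * phi (ety c d) a) ->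
  small_diffs E eps x -> E d c ->
  0 <= (x d - x c) * phi (ety c d) (x d - x c) /\
  ((x d - x c) * phi (ety c d) (x d - x c) = 0 -> x d = x c).
Proof.
move=> pos sd Edc; have [Ecd _] := bid _ _ Edc.
have hlt := sd _ _ Ecd.
have [h0|ne] := eqVneq (x d - x c) 0.
  by rewrite h0 mul0r; split => // _; apply/eqP; rewrite -subr_eq0 h0.
have h : 0 < (x d - x c) * phi (ety c d) (x d - x c).
  by apply: pos => //; rewrite normr_gt0 ne hlt.
by split; [exact: ltW | move=> h0; move: h; rewrite h0 ltxx].
Qed.
End S.
Arguments energy {R n ET E ety phi}.
Arguments term_ge0 {R n ET E ety phi} bid {eps x c d}.

Lemma nonincr (R : realType) (W dW : R -> R) (a b M : R) : a < 0 -> 0 < b ->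
  (forall t, a < t < b -> is_derive t 1 W (dW t)) -> W 0 < M ->
  (forall t, a < t < b -> W t < M -> dW t <= 0) ->
  forall t, 0 <= t < b -> W t <= W 0.
Proof.
move=> a0 b0 dWd WM neg t1 /andP[t10 t1b].
rewrite leNgt; apply/negP => Wt1.
set K := Num.min (W t1) ((W 0 + M)/2).
have K0 : W 0 < K by rewrite lt_min Wt1 /=; lra.
have KM : K < M by rewrite gt_min; apply/orP; right; lra.
have Kt1 : K <= W t1 by rewrite ge_min lexx.
set A := [set s | 0 <= s <= t1 /\ K <= W s].
have An : A !=set0 by exists t1; rewrite /A /= lexx t10.
have Alb : has_lbound A by exists 0 => s [/andP[]].
set ts := inf A.
have ts0 : 0 <= ts by apply: lb_le_inf => // s [/andP[]].
have tst1 : ts <= t1 by apply: ge_inf => //; rewrite /A /= lexx t10.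
have inab s : 0 <= s <= t1 -> a < s < b.
  by move=> /andP[s0 st]; apply/andP; split; lra.
have contW s : a < s < b -> {for s, continuous W}.
  move=> /dWd ds; apply: differentiable_continuous; apply/derivable1_diffP.
  exact: ex_derive.
have Wts : K <= W ts.
  rewrite leNgt; apply/negP => h.
  have tsab : a < ts < b by apply: inab; rewrite ts0 tst1.
  have [e e0 sub] : nbhs_ball ts (fun t => W t < K).
    apply/nbhs_ballP; exact: (@cvgr_lt R _ _ _ W (W ts) (contW ts tsab) K h).
  have [s As ste] := inf_adherent e0 (conj An Alb).
  have tss : ts <= s by apply: ge_inf.
  have : W s < K.
    apply: sub; rewrite /ball /= ler0_norm; lra.
  by case: As => _ /[swap] /lt_le_trans /[apply]; rewrite ltxx.
have tsp : 0 < ts.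
  rewrite lt_neqAle ts0 andbT; apply/negP => /eqP ts0'.
  by move: Wts; rewrite -ts0' leNgt K0.
have below s : 0 <= s < ts -> W s < K.
  move=> /andP[s0 sts]; rewrite ltNge; apply/negP => Ks.
  have : ts <= s by apply: ge_inf => //; split; [rewrite s0 /=; lra | exact: Ks].
  by rewrite leNgt sts.
have [c cin eq] : exists2 c, c \in `]0, ts[ & W ts - W 0 = dW c * (ts - 0).
  apply: MVT => //.
    move=> c; rewrite in_itv /= => /andP[c0 cts]; apply: dWd; apply: inab.
    by rewrite !ltW //; apply: lt_le_trans tst1.
  apply: derivable_within_continuous => c; rewrite in_itv /= => /andP[c0 cts].
  by apply: ex_derive; apply: dWd; apply: inab; rewrite c0 /=; apply: le_trans tst1.
move: cin; rewrite in_itv /= => /andP[c0 cts].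
have cab : a < c < b by apply: inab; rewrite ltW //= ltW //; apply: lt_le_trans tst1.
have Wc : W c < K by apply: below; rewrite ltW.
have dc := neg c cab (lt_trans Wc KM).
have : dW c * (ts - 0) <= 0 by rewrite subr0; apply: mulr_le0_ge0 => //; exact: ltW.
rewrite -eq; lra.
Qed.

Lemma W_deriv (R : realType) n (x : R -> 'I_n -> R) (y0 F : 'I_n -> R) (t : R) :
  (forall c, is_derive t (1:R) (fun s => x s c) (F c)) ->
  is_derive t 1 (fun s => \sum_i (x s i - y0 i)^+2)
    ((\sum_i (x t i - y0 i) * F i) *+ 2).
Proof.
move=> H.
have -> : (fun s => \sum_i (x s i - y0 i)^+2) =
    \sum_(i < n) (((fun s => x s i) - cst (y0 i))^+2).
  by apply/funext => s; rewrite fct_sumE; apply: eq_bigr => i _; rewrite exprfctE.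
apply: is_derive_eq.
rewrite -sumrMnl; apply: eq_bigr => i _ /=.
rewrite subr0 [_ *: _]mulrC /= expr1 /=.
have -> : (x^~ i - cst (y0 i)) t = x t i - y0 i by [].
rewrite -mulr_natl; ring.
Qed.


Section D.
Variables (R : realType) (n : nat).

Lemma Dset_ne (x : 'I_n -> R) : [set eucl_dist x y | y in @Delta R n] !=set0.
Proof. by exists (eucl_dist x (fun _ => 0)); exists (fun _ => 0). Qed.

Lemma Dset_lb (x : 'I_n -> R) : has_lbound [set eucl_dist x y | y in @Delta R n].
Proof. by exists 0 => _ [y _ <-]; exact: sqrtr_ge0. Qed.

Lemma dist_le (x y : 'I_n -> R) : Delta y -> dist_Delta x <= eucl_dist x y.
Proof. by move=> Dy; apply: ge_inf; [exact: Dset_lb | exists y]. Qed.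

Lemma dist_lt (x : 'I_n -> R) r0 : dist_Delta x < r0 ->
  exists2 y, Delta y & eucl_dist x y < r0.
Proof.
move=> h; have [z [y Dy <-] lt] := inf_lt (Dset_ne x) h.
by exists y.
Qed.

Lemma conn_eq (E : rel 'I_n) (x : 'I_n -> R) :
  (forall c d, E d c -> x d = x c) -> connected_net E -> Delta x.
Proof.
move=> H C i j; have /connectP [p pth ->] := C i j.
elim: p i pth => [|k p IH] i //= /andP[/orP[e|e] pth]; rewrite -(IH k pth).
  by rewrite (H k i e).
by rewrite (H i k e).
Qed.
End D.

Theorem lemma5p2 (R : realType) (n : nat) (ET CT : Type)
  (E : rel 'I_n) (ety : 'I_n -> 'I_n -> ET) (cty : 'I_n -> CT)
  (phi : ET -> R -> R) (eps : R) (r : \bar R) :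
  no_loops E -> types_compatible E ety cty ->
  connected_net E -> homogeneous E ety -> bidirected E ety ->
  (forall c d, E c d ->
     [/\ forall a, phi (ety c d) (- a) = - phi (ety c d) a,
         forall a, derivable (phi (ety c d)) a 1
       & continuous (derive1 (phi (ety c d)))]) ->
  0 < eps ->
  (forall c d, E c d -> forall a, 0 < `|a| < eps -> 0 < a * phi (ety c d) a) ->
  largest_cyl_radius E eps r ->
  (* (i) forward invariance of Omega = cyl r *)
  (forall (a b : R) (x : R -> 'I_n -> R),
     a < 0 < b -> is_solution (diff_field E ety phi) a b x ->
     cyl r (x 0) -> forall t, 0 <= t < b -> cyl r (x t)) /\
  (* (ii) equilibria in Omega are exactly the synchronous states *)
  (forall x : 'I_n -> R, cyl r x ->
     ((forall c, diff_field E ety phi x c = 0) <-> Delta x)).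
Proof.
move=> nl tc conn hom bid phiH eps0 pos [sub maxr].
have odd : forall c d, E c d -> forall a, phi (ety c d) (- a) = - phi (ety c d) a.
  by move=> c d /phiH [].
have en_le (x y : 'I_n -> R) : Delta y -> small_diffs E eps x ->
    (\sum_c (x c - y c) * diff_field E ety phi x c) *+ 2 <= 0.
  move=> Dy sd; rewrite (energy bid odd _ _ Dy) oppr_le0.
  apply: sumr_ge0 => c _; apply: sumr_ge0 => d Edc.
  exact: (term_ge0 bid pos sd Edc).1.
split.
  move=> a b x /andP[a0 b0] sol x0c t /andP[t0 tb].
  move: x0c; rewrite /cyl /=.
  case: r sub maxr => [r0| |] sub maxr x0c; last first.
  - by move: x0c; rewrite ltNge leNye.
  - by rewrite ltry.
  move: x0c; rewrite lte_fin => x0c.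
  have [y0 Dy0 ey] := dist_lt _ _ _ _ x0c.
  set W := fun s => \sum_i (x s i - y0 i)^+2.
  have eW s : eucl_dist (x s) y0 = Num.sqrt (W s) by [].
  have W0 s : 0 <= W s by apply: sumr_ge0 => i _; exact: sqr_ge0.
  have r0p : 0 < r0 by apply: le_lt_trans ey; exact: sqrtr_ge0.
  have key := @nonincr R W (fun s => (\sum_i (x s i - y0 i) * diff_field E ety phi (x s) i) *+ 2) a b (r0 ^+ 2) a0 b0.
  have : W t <= W 0.
    apply: key; last by rewrite t0 tb.
    - by move=> s sab; apply: W_deriv => c; exact: sol s sab c.
    - by rewrite -ltr_sqrt ?exprn_gt0 // sqrtr_sqr gtr0_norm.
    move=> s sab Ws; apply: (en_le _ _ Dy0); apply: sub; rewrite /cyl /= lte_fin.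
    apply: le_lt_trans (dist_le _ _ _ _ Dy0) _; rewrite eW.
    by rewrite -(gtr0_norm r0p) -sqrtr_sqr ltr_sqrt // exprn_gt0.
  move=> Wt; rewrite lte_fin; apply: le_lt_trans (dist_le _ _ _ _ Dy0) _.
  apply: le_lt_trans ey; rewrite !eW ler_sqrt //.
move=> x xc; have sd := sub x xc; split.
  move=> f0.
  have S0 : \sum_c \sum_(d < n | E d c) (x d - x c) * phi (ety c d) (x d - x c) = 0.
    have := energy bid odd x (fun _ => 0) (fun _ _ => erefl).
    rewrite big1 ?mul0rn => [|c _]; last by rewrite f0 mulr0.
    by move/esym/eqP; rewrite oppr_eq0 => /eqP.
  apply: conn_eq conn => c d Edc.
  have ge0 c' : 0 <= \sum_(d < n | E d c') (x d - x c') * phi (ety c' d) (x d - x c').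
    by apply: sumr_ge0 => d' Ed'; exact: (term_ge0 bid pos sd Ed').1.
  have h1 := psumr_eq0P (fun c' _ => ge0 c') S0 (i:=c) isT.
  have h2 := psumr_eq0P (fun d' Ed' => (term_ge0 bid pos sd Ed').1) h1 (i:=d) Edc.
  exact: (term_ge0 bid pos sd Edc).2.
move=> Dx c; rewrite /diff_field big1 // => d Edc.
rewrite (Dx d c) subrr.
have [Ecd _] := bid _ _ Edc.
have := odd _ _ Ecd 0; rewrite oppr0; lra.
Qed.
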